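(* Let $m_{max} \ge 1$ be a fixed positive integer. Then \[ \pi = i \lim_{k\to\infty} 2^{k+1} \sum_{m=1}^{m_{max}} \frac{1}{2m-1}\left( \frac{1}{\left(1 + 2i\, a_k/\sqrt{2 - a_{k-1}}\right)^{2m-1}} - \frac{1}{\left(1 - 2i\, a_k/\sqrt{2 - a_{k-1}}\right)^{2m-1}} \right). \]
   Context: Here $i$ is the imaginary unit. The nested radicals $a_k$ are defined by $a_0 = 0$ and $a_k = \sqrt{2 + a_{k-1}}$ for $k \ge 1$. Thus $a_k = \sqrt{2+\sqrt{2+\cdots+\sqrt{2}}}$ with $k$ square roots. *)

(* Defs.v *)
From Stdlib Require Import Reals.
From Coquelicot Require Import Coquelicot.
Open Scope R_scope.

Fixpoint a (k : nat) : R :=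
  match k with
  | O => 0
  | S j => sqrt (2 + a j)
  end.

(* x_k = a_k / sqrt(2 - a_{k-1}); for k = 0 we use a_{0-1} := a_0 (truncated
   subtraction), which is irrelevant for the limit k -> oo. *)
Definition xk (k : nat) : R := a k / sqrt (2 - a (k - 1)).

Definition term (mmax k : nat) : C :=
  Cmult (RtoC (2 ^ (k + 1)))
    (sum_n_m (fun m : nat =>
        Cmult (RtoC (/ INR (2 * m - 1)))
          (Cminus (Cinv (pow_n (Cplus (RtoC 1) (Cmult (RtoC (2 * xk k)) Ci)) (2 * m - 1)))
                  (Cinv (pow_n (Cminus (RtoC 1) (Cmult (RtoC (2 * xk k)) Ci)) (2 * m - 1)))))
      1 mmax).

(* Main.v *)
Require Import Defs.
From Stdlib Require Import Reals Lra Lia Psatz.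
From Coquelicot Require Import Coquelicot.
Open Scope R_scope.

Definition th (k : nat) : R := PI / 2 ^ (k + 1).

Lemma th_pos k : 0 < th k.
Proof. unfold th. apply Rdiv_lt_0_compat. apply PI_RGT_0. apply pow_lt; lra. Qed.

Lemma th_S k : th k = 2 * th (S k).
Proof. unfold th. replace (S k + 1)%nat with (S (k+1)) by lia. simpl. field.
  apply pow_nonzero; lra. Qed.

Lemma th_le k : th k <= PI / 2.
Proof. unfold th. assert (1 <= 2 ^ k) by (apply pow_R1_Rle; lra).
  rewrite pow_add. simpl. apply Rmult_le_compat_l. pose proof PI_RGT_0; lra.
  apply Rinv_le_contravar; lra. Qed.

Lemma a_cos k : a k = 2 * cos (th k).
Proof.
  induction k as [|k IH].
  - simpl. unfold th. simpl. replace (PI / (2*1)) with (PI/2) by field. rewrite cos_PI2. ring.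
  - simpl a. rewrite IH. rewrite (th_S k). rewrite cos_2a_cos.
    assert (0 <= cos (th (S k))).
    { apply cos_ge_0. pose proof (th_pos (S k)); pose proof PI_RGT_0; lra. apply th_le. }
    replace (2 + 2 * (2 * cos (th (S k)) * cos (th (S k)) - 1)) with ((2 * cos (th (S k)))²) by (unfold Rsqr; ring).
    apply sqrt_Rsqr. lra.
Qed.

Lemma xk_eq k : (1 <= k)%nat -> xk k = cos (th k) / sin (th k).
Proof.
  intros Hk. destruct k as [|j]; [lia|]. unfold xk.
  replace (S j - 1)%nat with j by lia. rewrite !a_cos. rewrite (th_S j). rewrite cos_2a_sin.
  assert (0 < sin (th (S j))).
  { apply sin_gt_0. apply th_pos. pose proof (th_le (S j)); pose proof PI_RGT_0; lra. }
  replace (2 - 2 * (1 - 2 * sin (th (S j)) * sin (th (S j)))) with ((2 * sin (th (S j)))²) by (unfold Rsqr; ring).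
  rewrite sqrt_Rsqr by lra. field. lra.
Qed.

Lemma sin_bounds t : 0 <= t -> t <= PI -> t - t^3/6 <= sin t <= t.
Proof.
  intros H1 H2. pose proof (sin_bound t 0 H1 H2) as [A B].
  unfold sin_approx, sin_term in *. simpl in *. split; [lra|].
  destruct (Req_dec t 0). subst. rewrite sin_0. lra. left. apply sin_lt_x. lra.
Qed.

Lemma cos_lbound t : - PI / 2 <= t -> t <= PI / 2 -> 1 - t^2/2 <= cos t.
Proof.
  intros H1 H2. pose proof (cos_bound t 0 H1 H2) as [A B].
  unfold cos_approx, cos_term in *. simpl in *. lra.
Qed.

Lemma lim_th : is_lim_seq th 0.
Proof.
  apply is_lim_seq_ext with (fun k => PI / 2 * (/2) ^ k).
  { intros k. unfold th. rewrite pow_add, <- Rinv_pow by lra. simpl. field. apply pow_nonzero; lra. }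
  replace (Finite 0) with (Rbar_mult (PI/2) 0) by (simpl; f_equal; ring).
  apply is_lim_seq_scal_l. apply is_lim_seq_geom. rewrite Rabs_pos_eq; lra.
Qed.

Lemma lim_th2 (c : R) : is_lim_seq (fun k => c * (th k * th k)) 0.
Proof.
  replace 0 with (c * (0 * 0)) by ring.
  apply is_lim_seq_mult'. apply is_lim_seq_const. apply is_lim_seq_mult'; apply lim_th.
Qed.

Definition fk (k : nat) : R :=
  PI * (sin (th k) / th k) * (4 * cos (th k) / (sin (th k) * sin (th k) + 4 * (cos (th k) * cos (th k)))).

Lemma th_le1 k : th k <= PI.
Proof. pose proof (th_le k); pose proof PI_RGT_0; lra. Qed.

Lemma lim_fk : is_lim_seq fk PI.
Proof.
  assert (Hs : is_lim_seq (fun k => sin (th k) / th k) 1).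
  { apply is_lim_seq_le_le with (fun k => 1 + (-/6) * (th k * th k)) (fun _ => 1).
    - intros k. pose proof (th_pos k). pose proof (sin_bounds (th k) (Rlt_le _ _ H) (th_le1 k)).
      split.
      + apply Rmult_le_reg_r with (th k); auto. unfold Rdiv. rewrite Rmult_assoc, Rinv_l by lra. nra.
      + apply Rmult_le_reg_r with (th k); auto. unfold Rdiv. rewrite Rmult_assoc, Rinv_l by lra. nra.
    - replace (Finite 1) with (Finite (1 + 0)) by (f_equal; ring).
      apply is_lim_seq_plus'. apply is_lim_seq_const. apply lim_th2.
    - apply is_lim_seq_const. }
  assert (Hc : is_lim_seq (fun k => cos (th k)) 1).
  { apply is_lim_seq_le_le with (fun k => 1 + (-/2) * (th k * th k)) (fun _ => 1).
    - intros k. pose proof (th_pos k). pose proof (th_le k). pose proof PI_RGT_0.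
      pose proof (cos_lbound (th k) ltac:(lra) H0). split. simpl in H2. lra. apply COS_bound.
    - replace (Finite 1) with (Finite (1 + 0)) by (f_equal; ring).
      apply is_lim_seq_plus'. apply is_lim_seq_const. apply lim_th2.
    - apply is_lim_seq_const. }
  assert (Hs0 : is_lim_seq (fun k => sin (th k)) 0).
  { apply is_lim_seq_le_le with (fun _ => 0) th.
    - intros k. pose proof (th_pos k). pose proof (sin_bounds (th k) (Rlt_le _ _ H) (th_le1 k)).
      split; [|lra]. apply sin_ge_0. lra. apply th_le1.
    - apply is_lim_seq_const.
    - apply lim_th. }
  replace PI with (PI * 1 * (4 * 1 / (0 * 0 + 4 * (1 * 1)))) by field.
  unfold fk. apply is_lim_seq_mult'. apply is_lim_seq_mult'. apply is_lim_seq_const. exact Hs.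
  apply is_lim_seq_div'. apply is_lim_seq_mult'. apply is_lim_seq_const. exact Hc.
  apply is_lim_seq_plus'. apply is_lim_seq_mult'; exact Hs0.
  apply is_lim_seq_mult'. apply is_lim_seq_const. apply is_lim_seq_mult'; exact Hc.
  lra.
Qed.

Definition wp (x : R) : C := Cplus (RtoC 1) (Cmult (RtoC (2 * x)) Ci).
Definition wm (x : R) : C := Cminus (RtoC 1) (Cmult (RtoC (2 * x)) Ci).

Lemma Cmod_pow_n (z : C) n : Cmod (pow_n z n) = Cmod z ^ n.
Proof. induction n; simpl. apply Cmod_1. change (Cmod (Cmult z (pow_n z n)) = Cmod z * Cmod z ^ n).
  rewrite Cmod_mult, IHn; reflexivity. Qed.

Lemma Cmod_wp x : 0 <= x -> 2 * x <= Cmod (wp x).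
Proof. intros. unfold wp, Cmod; simpl. apply Rle_trans with (sqrt ((2*x)*(2*x))); [rewrite sqrt_square; lra|].
  apply sqrt_le_1_alt. nra. Qed.
Lemma Cmod_wm x : 0 <= x -> 2 * x <= Cmod (wm x).
Proof. intros. unfold wm, Cmod; simpl. apply Rle_trans with (sqrt ((2*x)*(2*x))); [rewrite sqrt_square; lra|].
  apply sqrt_le_1_alt. nra. Qed.

Lemma inv_pow_bound (z : C) n : 1 <= Cmod z -> (3 <= n)%nat -> Cmod (Cinv (pow_n z n)) <= / Cmod z ^ 3.
Proof.
  intros H Hn. assert (Hp : 0 < Cmod z ^ n) by (apply pow_lt; lra).
  rewrite Cmod_inv. rewrite Cmod_pow_n. apply Rinv_le_contravar. apply pow_lt; lra.
  apply Rle_pow; auto.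
  intro E. rewrite <- Cmod_pow_n in Hp. rewrite E, Cmod_0 in Hp. lra.
Qed.

Lemma first_term x : 0 < x ->
  Cmult (RtoC (/ INR (2 * 1 - 1))) (Cminus (Cinv (pow_n (wp x) (2 * 1 - 1))) (Cinv (pow_n (wm x) (2 * 1 - 1))))
  = (0, - (4 * x / (1 + 4 * x ^ 2))).
Proof.
  intros Hx. simpl. unfold wp, wm, Cinv, Cmult, Cminus, Cplus, Copp, RtoC, Ci; simpl.
  apply injective_projections; simpl; field; nra.
Qed.

Definition gm (x : R) (m : nat) : C :=
  Cmult (RtoC (/ INR (2 * m - 1))) (Cminus (Cinv (pow_n (wp x) (2 * m - 1))) (Cinv (pow_n (wm x) (2 * m - 1)))).

Lemma term_split mmax k : (1 <= mmax)%nat ->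
  term mmax k = Cplus (Cmult (RtoC (2 ^ (k + 1))) (gm (xk k) 1))
                     (Cmult (RtoC (2 ^ (k + 1))) (sum_n_m (gm (xk k)) 2 mmax)).
Proof.
  intros H. unfold term. rewrite <- Cmult_plus_distr_l. f_equal. assert (Eg : (fun m : nat => ((/ INR (2 * m - 1))%R * (/ pow_n (1 + (2 * xk k)%R * Ci) (2 * m - 1) - / pow_n (1 - (2 * xk k)%R * Ci) (2 * m - 1)))%C) = gm (xk k)) by reflexivity. rewrite Eg.
  rewrite (sum_n_m_Chasles _ 1 1 mmax) by lia. rewrite sum_n_n. reflexivity.
Qed.

Lemma gm_bound x m : 1/2 <= x -> (2 <= m)%nat -> Cmod (gm x m) <= 2 * / (2 * x) ^ 3.
Proof.
  intros Hx Hm. unfold gm. rewrite Cmod_mult, Cmod_R.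
  assert (H1 : 1 <= INR (2 * m - 1)) by (apply (le_INR 1); lia).
  assert (H2 : 0 < / INR (2 * m - 1) <= 1).
  { split. apply Rinv_0_lt_compat; lra. rewrite <- Rinv_1. apply Rinv_le_contravar; lra. }
  rewrite Rabs_pos_eq by lra.
  assert (Hb : Cmod (Cminus (Cinv (pow_n (wp x) (2 * m - 1))) (Cinv (pow_n (wm x) (2 * m - 1)))) <= 2 * / (2 * x) ^ 3).
  { unfold Cminus. eapply Rle_trans. apply Cmod_triangle. rewrite Cmod_opp.
    pose proof (Cmod_wp x ltac:(lra)). pose proof (Cmod_wm x ltac:(lra)).
    assert (0 < (2*x)^3) by (apply pow_lt; lra).
    assert (/ Cmod (wp x) ^ 3 <= / (2 * x) ^ 3).
    { apply Rinv_le_contravar; auto. apply pow_incr; lra. }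
    assert (/ Cmod (wm x) ^ 3 <= / (2 * x) ^ 3).
    { apply Rinv_le_contravar; auto. apply pow_incr; lra. }
    pose proof (inv_pow_bound (wp x) (2*m-1) ltac:(lra) ltac:(lia)).
    pose proof (inv_pow_bound (wm x) (2*m-1) ltac:(lra) ltac:(lia)).
    lra. }
  assert (0 <= Cmod (Cminus (Cinv (pow_n (wp x) (2 * m - 1))) (Cinv (pow_n (wm x) (2 * m - 1))))) by apply Cmod_ge_0.
  nra.
Qed.

Lemma rest_bound x mmax : 1/2 <= x ->
  Cmod (sum_n_m (gm x) 2 mmax) <= INR mmax * (2 * / (2 * x) ^ 3).
Proof.
  intros Hx. eapply Rle_trans. exact (@norm_sum_n_m C_AbsRing C_NormedModule (gm x) 2 mmax).
  rewrite (sum_n_m_ext_loc _ (fun m => Rmin (Cmod (gm x m)) (2 * / (2 * x) ^ 3))).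
  2:{ intros m Hm. rewrite Rmin_left; auto. apply gm_bound; auto; lia. }
  eapply Rle_trans. apply sum_n_m_le with (b := fun _ => 2 * / (2 * x) ^ 3). intros; apply Rmin_r.
  rewrite sum_n_m_const. apply Rmult_le_compat_r.
  assert (0 < (2*x)^3) by (apply pow_lt; lra). assert (0 < / (2*x)^3) by (apply Rinv_0_lt_compat; lra). lra.
  apply le_INR. lia.
Qed.

Theorem mainTheorem2 (mmax : nat) (Hm : (1 <= mmax)%nat) :
  exists L : C,
    filterlim (fun k : nat => term mmax k) eventually (locally L) /\
    RtoC PI = Cmult Ci L.
Proof.
  exists (0, - PI). split.
  2:{ unfold Cmult, Ci, RtoC; simpl. apply injective_projections; simpl; ring. }
  apply (proj2 (@filterlim_locally_ball_norm C_AbsRing nat C_NormedModule eventually _ (fun k => term mmax k) (0, - PI))). intros eps.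
  assert (He : 0 < eps / 2) by (destruct eps; simpl; lra).
  pose proof (proj2 (is_lim_seq_spec _ _) lim_fk (mkposreal _ He)) as [N1 HN1].
  pose proof (proj2 (is_lim_seq_spec _ _) (lim_th2 (INR mmax * 2 * PI)) (mkposreal _ He)) as [N2 HN2].
  exists (N1 + N2 + 1)%nat. intros k Hk.
  specialize (HN1 k ltac:(lia)). specialize (HN2 k ltac:(lia)). simpl in HN1, HN2.
  unfold ball_norm. change (Cmod (Cminus (term mmax k) (0, -PI)) < eps).
  rewrite term_split by auto.
  set (t := th k) in *. set (s := sin t). set (c := cos t).
  assert (Ht0 : 0 < t) by apply th_pos.
  assert (Ht1 : t <= PI / 4).
  { unfold t. destruct k as [|j]; [lia|]. pose proof (th_S j). pose proof (th_le j). lra. }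
  pose proof PI_4 as HP4. pose proof PI_RGT_0 as HP0.
  pose proof (sin_bounds t ltac:(lra) ltac:(lra)) as [Hs1 Hs2]. fold s in Hs1, Hs2.
  assert (Hs0 : 0 < s).
  { unfold s. apply sin_gt_0; lra. }
  assert (Hc : 1/2 <= c).
  { pose proof (cos_lbound t ltac:(lra) ltac:(lra)). unfold c. simpl in H. nra. }
  assert (Hx : xk k = c / s) by (apply xk_eq; lia).
  set (x := xk k) in *.
  assert (Hxt : / (2 * t) <= x).
  { rewrite Hx. apply Rle_trans with (c / t).
    apply Rmult_le_reg_r with (2 * t). lra. field_simplify; lra.
    unfold Rdiv. apply Rmult_le_compat_l. lra. apply Rinv_le_contravar; lra. }
  assert (Hx2 : 1/2 <= x).
  { eapply Rle_trans; [|exact Hxt]. apply Rmult_le_reg_r with (2 * t). lra.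
    field_simplify; lra. }
  assert (H2k : 2 ^ (k + 1) = PI / t).
  { unfold t, th. field. split; [apply pow_nonzero; lra | lra]. }
  replace (gm x 1) with ((0, - (4 * x / (1 + 4 * x ^ 2))) : C) by (symmetry; apply (first_term x); nra).
  unfold Cminus. rewrite <- Cplus_assoc, (Cplus_comm _ (Copp _)), Cplus_assoc.
  eapply Rle_lt_trans. apply Cmod_triangle.
  assert (E1 : Cmod (Cplus (Cmult (RtoC (2 ^ (k + 1))) (0, - (4 * x / (1 + 4 * x ^ 2)))) (Copp (0, - PI))) = Rabs (fk k - PI)).
  { replace (Cplus (Cmult (RtoC (2 ^ (k + 1))) (0, - (4 * x / (1 + 4 * x ^ 2)))) (Copp (0, - PI)))
      with (RtoC (PI - fk k) * Ci)%C.
    assert (HCi : Cmod Ci = 1).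
    { unfold Cmod, Ci; simpl. replace (0 * (0 * 1) + 1 * (1 * 1)) with 1 by ring. apply sqrt_1. }
    rewrite Cmod_mult, Cmod_R, HCi, Rmult_1_r. apply Rabs_minus_sym.
    unfold fk. fold t. fold s c. rewrite H2k, Hx.
    unfold Cmult, Cplus, Copp, RtoC, Ci; simpl. apply injective_projections; simpl; field; nra. }
  rewrite E1.
  assert (E2 : Cmod (Cmult (RtoC (2 ^ (k + 1))) (sum_n_m (gm x) 2 mmax)) <= INR mmax * 2 * PI * (t * t)).
  { rewrite Cmod_mult, Cmod_R, Rabs_pos_eq by (apply pow_le; lra).
    eapply Rle_trans. apply Rmult_le_compat_l. apply pow_le; lra. apply rest_bound; auto.
    rewrite H2k.
    assert (/ (2*x)^3 <= t^3).
    { replace (t^3) with (/ (/ t)^3). apply Rinv_le_contravar. apply pow_lt, Rinv_0_lt_compat; lra.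
      apply pow_incr. split. apply Rlt_le, Rinv_0_lt_compat; lra.
      apply Rle_trans with (2 * / (2*t)). right. field. lra. nra.
      rewrite pow_inv. apply Rinv_inv. }
    assert (0 <= INR mmax) by apply pos_INR.
    apply Rle_trans with (PI / t * (INR mmax * (2 * t^3))).
    apply Rmult_le_compat_l. apply Rlt_le, Rdiv_lt_0_compat; lra. apply Rmult_le_compat_l; lra.
    right. field. lra. }
  rewrite Rminus_0_r in HN2. rewrite Rabs_pos_eq in HN2.
  2:{ assert (0 <= INR mmax) by apply pos_INR. apply Rmult_le_pos. nra. nra. }
  destruct eps; simpl in *. lra.
Qed.
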